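(* Let $n\ge 1$ and let $\mathbf{u}=[u(1),\dots,u(n)]$ and $\mathbf{v}=[v(1),\dots,v(n)]$ be permutations in $S_n$ (one-line notation), with inverse functions $u^{-1},v^{-1}$. Define virtual levels $\ell_1,\dots,\ell_n$ by the following procedure: first, for $i=1,\dots,n$ set $\ell_{u(i)}\leftarrow n+1-i$; then, for $i=n-1,n-2,\dots,1$ (in this order) set $\ell_{v(i)}\leftarrow \max\{\ell_{v(i+1)}+1,\ \ell_{v(i)}\}$. Define the rewriting cost $C(\mathbf{u}\to\mathbf{v})=\ell_{v(1)}-n$, where $\ell_{v(1)}$ is the value at the end of the procedure. Then $$C(\mathbf{u}\to \mathbf{v})=\max_{i\in \{1,\dots,n\}}\bigl(v^{-1}(i)-u^{-1}(i)\bigr).$$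
   Context: A state of $n$ cells is a permutation $\mathbf{u}=[u(1),\dots,u(n)]\in S_n$, meaning cell $u(1)$ has the highest charge level and $u(n)$ the lowest; cell $u(i)$ has rank $i$, so $u^{-1}(j)$ is the rank (position) of cell $j$. The procedure in the claim models changing the state from $\mathbf{u}$ to $\mathbf{v}$ by ''minimal-push-up'' operations. *)

(* Defs.v *)
From mathcomp Require Import all_boot all_order all_algebra all_fingroup.
Set Implicit Arguments. Unset Strict Implicit. Unset Printing Implicit Defensive.
Import Order.TTheory GRing.Theory Num.Theory.
Local Open Scope ring_scope.

(* Conventions: cells and ranks are 0-indexed ('I_n), i.e. cell c / rank p here
   correspond to cell c+1 / rank p+1 in the paper. *)

Definition one_line (n : nat) (u : {perm 'I_n}) : seq nat :=
  [seq (val (u i) : nat) | i <- enum 'I_n].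

(* first phase: l_{u(i)} <- n+1-i, i.e. l_c = n - (0-indexed position of c in u) *)
Definition init_levels (n : nat) (us : seq nat) : nat -> int :=
  fun c => (n%:Z - (index c us)%:Z).

Definition level_step (vs : seq nat) (l : nat -> int) (p : nat) : nat -> int :=
  let c := nth 0%N vs p in
  fun x => if x == c then Num.max (l (nth 0%N vs p.+1) + 1) (l c) else l x.

(* second phase: positions i = n-1, n-2, ..., 1 (1-indexed), i.e. p = n-2, ..., 0 *)
Definition final_levels (n : nat) (u v : {perm 'I_n}) : nat -> int :=
  foldl (level_step (one_line v)) (init_levels n (one_line u)) (rev (iota 0 n.-1)).

Definition rewrite_cost (n : nat) (u v : {perm 'I_n}) : int :=
  final_levels u v (nth 0%N (one_line v) 0) - n%:Z.

Definition maxz_seq (s : seq int) : int := foldr Num.max (head 0 s) s.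

(* Main.v *)
Require Import Defs.
From mathcomp Require Import all_boot all_order all_algebra all_fingroup.
From mathcomp Require Import zify ring.
Import Order.TTheory GRing.Theory Num.Theory.
Local Open Scope ring_scope.

Section Aux.
Variables (vs : seq nat) (f0 : nat -> int).
Hypothesis Hu : uniq vs.
Hypothesis Hn : (0 < size vs)%N.

Definition Sj (j : nat) : nat -> int :=
  foldr (fun x a => level_step vs a x) f0 (iota j ((size vs).-1 - j)).

Lemma Sj_prop (k : nat) : (k <= (size vs).-1)%N ->
  let j := ((size vs).-1 - k)%N in
  (forall q, (q < j)%N -> Sj j (nth 0%N vs q) = f0 (nth 0%N vs q)) /\
  (forall r, (j <= r < size vs)%N -> f0 (nth 0%N vs r) + (r - j)%:Z <= Sj j (nth 0%N vs j)) /\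
  (exists r, (j <= r < size vs)%N /\ Sj j (nth 0%N vs j) = f0 (nth 0%N vs r) + (r - j)%:Z).
Proof.
elim: k => [|k IH] Hk /=.
- rewrite /Sj subn0 subnn /=; split; [by []|split].
  + move=> r /andP[H1 H2].
    have -> : r = (size vs).-1 by lia.
    by rewrite subnn addr0.
  + exists (size vs).-1; split; last by rewrite subnn addr0.
    apply/andP; split => //; lia.
- have [IHa [IHb [r0 [Hr0 IHc]]]] := IH (ltnW Hk).
  set j := ((size vs).-1 - k)%N in IHa IHb Hr0 IHc *.
  have Hj : ((size vs).-1 - k.+1)%N = j.-1 by rewrite /j; lia.
  rewrite Hj.
  have Hsj : j.-1.+1 = j by rewrite /j; lia.
  have HS : Sj j.-1 = level_step vs (Sj j) j.-1.
    rewrite /Sj.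
    have -> : ((size vs).-1 - j.-1)%N = ((size vs).-1 - j).+1 by rewrite /j; lia.
    by rewrite /= Hsj.
  rewrite HS /level_step eqxx Hsj.
  have Hsz : (j < size vs)%N by rewrite /j; lia.
  have Hj1 : (j.-1 < size vs)%N by lia.
  have HSjm1 : Sj j (nth 0%N vs j.-1) = f0 (nth 0%N vs j.-1).
    apply: IHa; lia.
  rewrite HSjm1.
  split; [|split].
  + move=> q Hq.
    have -> : (nth 0%N vs q == nth 0%N vs j.-1) = false.
      have Hqs : (q < size vs)%N by lia.
      rewrite nth_uniq //; lia.
    apply: IHa; lia.
  + move=> r /andP[H1 H2]; rewrite le_max.
    have [->|Hne] := eqVneq r j.-1.
      by rewrite subnn addr0 lexx orbT.
    apply/orP; left.
    have := IHb r ltac:(apply/andP; split; lia).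
    have -> : (r - j.-1)%N = (r - j).+1 by lia.
    move=> H. rewrite -addn1 PoszD addrA lerD2r. exact H.
  + case: (leP (Sj j (nth 0%N vs j) + 1) (f0 (nth 0%N vs j.-1))) => Hle.
    * exists j.-1; split; last by rewrite subnn addr0.
      apply/andP; split => //.
    * exists r0; split; first by apply/andP; split; lia.
      rewrite IHc.
      have -> : (r0 - j.-1)%N = (r0 - j).+1 by lia.
      by rewrite -addn1 PoszD addrA.
Qed.

End Aux.


Lemma maxz_ub_gen {s : seq int} {d x} : x \in s -> x <= foldr Num.max d s.
Proof.
elim: s => // a t IH; rewrite inE => /orP[/eqP ->|H] /=; rewrite le_max.
  by rewrite lexx.
by rewrite IH ?orbT.
Qed.

Lemma maxz_in_gen (s : seq int) d : foldr Num.max d s \in d :: s.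
Proof.
elim: s => [|a t IH] /=; first by rewrite inE.
case: (leP a (foldr Num.max d t)) => _.
  move: IH; rewrite !inE => /orP[->|->] //; by rewrite !orbT.
by rewrite !inE eqxx orbT.
Qed.

Lemma maxz_ub {s : seq int} {x} : x \in s -> x <= maxz_seq s.
Proof. exact: maxz_ub_gen. Qed.

Lemma maxz_in {s : seq int} : s != [::] -> maxz_seq s \in s.
Proof.
case: s => // a t _; have := maxz_in_gen (a :: t) a.
by rewrite /maxz_seq /= inE => /orP[/eqP ->|]; rewrite ?inE ?eqxx.
Qed.

Lemma one_line_size {n} (u : {perm 'I_n}) : size (one_line u) = n.
Proof. by rewrite size_map size_enum_ord. Qed.

Lemma one_line_nth {n} (u : {perm 'I_n}) (i : 'I_n) :
  nth 0%N (one_line u) i = val (u i).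
Proof.
rewrite (nth_map i) ?size_enum_ord //.
by rewrite nth_ord_enum.
Qed.

Lemma one_line_uniq {n} (u : {perm 'I_n}) : uniq (one_line u).
Proof.
rewrite map_inj_uniq ?enum_uniq // => x y /val_inj; exact: perm_inj.
Qed.

Lemma one_line_index {n} (u : {perm 'I_n}) (c : 'I_n) :
  index (val c) (one_line u) = val ((u^-1)%g c).
Proof.
have := one_line_nth u ((u^-1)%g c); rewrite permKV => <-.
by rewrite index_uniq ?one_line_size ?one_line_uniq.
Qed.

Theorem theorem1 (n : nat) (hn : (1 <= n)%N) (u v : {perm 'I_n}) :
  rewrite_cost u v =
  maxz_seq [seq ((val ((v^-1)%g i))%:Z - (val ((u^-1)%g i))%:Z) | i <- enum 'I_n].
Proof.
set vs := one_line v.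
have Hsz : size vs = n by apply: one_line_size.
have Hu : uniq vs by apply: one_line_uniq.
have Hn : (0 < size vs)%N by rewrite Hsz.
have HF : final_levels u v = Sj vs (init_levels n (one_line u)) 0.
  by rewrite /final_levels foldl_rev /Sj subn0 Hsz.
have [_ [Hb [r [Hr Hc]]]] := @Sj_prop vs (init_levels n (one_line u)) Hu Hn _ (leqnn _).
rewrite subnn in Hb Hc.
rewrite /rewrite_cost HF.
apply/le_anti/andP; split.
- move: Hr; rewrite Hsz => /andP[_ Hr].
  rewrite Hc subn0.
  have := one_line_nth v (Ordinal Hr); rewrite /= -/vs => ->.
  rewrite /init_levels one_line_index.
  set i := v (Ordinal Hr).
  have Hi : (val ((v^-1)%g i))%:Z - (val ((u^-1)%g i))%:Z \in
     [seq ((val ((v^-1)%g i))%:Z - (val ((u^-1)%g i))%:Z) | i <- enum 'I_n].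
    by apply: map_f; rewrite mem_enum.
  have := maxz_ub Hi; rewrite /i permK /=.
  move=> H; apply: le_trans H; rewrite le_eqVlt; apply/orP; left; apply/eqP.
  ring.
- have Hne : [seq ((val ((v^-1)%g i))%:Z - (val ((u^-1)%g i))%:Z) | i <- enum 'I_n] != [::].
    by rewrite -size_eq0 size_map size_enum_ord -lt0n.
  have /mapP[i _ ->] := maxz_in Hne.
  have Hr' : (0 <= val ((v^-1)%g i) < size vs)%N by rewrite Hsz ltn_ord.
  have := Hb _ Hr'.
  have := one_line_nth v ((v^-1)%g i); rewrite permKV -/vs => ->.
  rewrite /init_levels one_line_index subn0 => H.
  rewrite lerBrDr; apply: le_trans H; rewrite le_eqVlt; apply/orP; left; apply/eqP.
  ring.
Qed.
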